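(* In $Q_n$, each of the sets $\{x_{\emptyset,k}: k=1,\dots,n\}$ and $\{x_{\{1,\dots,n\}\setminus\{k\},k}: k=1,\dots,n\}$ is a sufficient set, i.e. its $du$-envelope contains a defining set of pseudo-roots of $\mathcal P(t)$.
   Context: Fix a field $k$. $Q_n$ is the associative unital $k$-algebra with generators $x_{A,i}$ ($A\subseteq\{1,\dots,n\}$, $i\notin A$), called pseudo-roots, subject to $x_{A\cup\{i\},j}+x_{A,i}=x_{A\cup\{j\},i}+x_{A,j}$ and $x_{A\cup\{i\},j}\,x_{A,i}=x_{A\cup\{j\},i}\,x_{A,j}$ for all $A$ and $i\ne j$, $i,j\notin A$. With $t$ central, $\mathcal P(t)=(t-x_{A_n,i_n})\cdots(t-x_{A_1,i_1})$ for an ordering $(i_1,\dots,i_n)$ of $\{1,\dots,n\}$ and $A_k=\{i_1,\dots,i_{k-1}\}$ (independent of the ordering). A set $Y$ of pseudo-roots is defining if $\mathcal P(t)=(t-y_n)\cdots(t-y_1)$ with all $y_k\in Y$. The pseudo-root $x_{A,i}$ corresponds to an edge with tail $A\cup\{i\}$ and head $A$. For distinct pseudo-roots $x_{A,i},x_{B,j}$ with $A=B$ (common head), $\xi$ is obtained from the ordered pair by the $u$-operation if $(x_{A,i}-x_{B,j})x_{A,i}=\xi(x_{A,i}-x_{B,j})$; for distinct pseudo-roots with $A\cup\{i\}=B\cup\{j\}$ (common tail), $\eta$ is obtained by the $d$-operation if $(x_{A,i}-x_{B,j})\eta=x_{A,i}(x_{A,i}-x_{B,j})$. The $du$-envelope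 of a set $Z$ of pseudo-roots is the set of pseudo-roots obtained from $Z$ by successive $d$- and $u$-operations; $Z$ is sufficient if its $du$-envelope contains a defining set. *)

(* Defs.v *)
From HB Require Import structures.
From mathcomp Require Import all_boot all_order all_algebra.
Set Implicit Arguments. Unset Strict Implicit. Unset Printing Implicit Defensive.
Import GRing.Theory.
Local Open Scope ring_scope.

(* Indices {1,...,n} are represented by 'I_n.  A pseudo-root x_{A,i} is
   represented by the pair (A, i) with i \notin A. *)
Definition proot (n : nat) := ({set 'I_n} * 'I_n)%type.
Definition valid_proot n (p : proot n) : bool := p.2 \notin p.1.

Definition Qrel (k : fieldType) (n : nat) (R : algType k)
  (f : {set 'I_n} -> 'I_n -> R) : Prop :=
  forall (A : {set 'I_n}) (i j : 'I_n), i != j -> i \notin A -> j \notin A ->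
    f (i |: A) j + f A i = f (j |: A) i + f A j /\
    f (i |: A) j * f A i = f (j |: A) i * f A j.

(* An identity E holds in Q_n: by the universal property of the presented
   algebra Q_n, this means it holds for every relation-satisfying assignment
   of the generators in every (associative unital) k-algebra. *)
Definition Qholds (k : fieldType) (n : nat)
  (E : forall R : algType k, ({set 'I_n} -> 'I_n -> R) -> Prop) : Prop :=
  forall (R : algType k) (f : {set 'I_n} -> 'I_n -> R), Qrel f -> E R f.

(* (t - y_m) ... (t - y_1) for ys = [:: y_1; ...; y_m], t central. *)
Definition prod_roots (n : nat) (R : nzRingType) (f : {set 'I_n} -> 'I_n -> R)
  (ys : seq (proot n)) : {poly R} :=
  foldr (fun y acc => acc * ('X - (f y.1 y.2)%:P)) 1 ys.

(* P(t), computed with the ordering (1, 2, ..., n), i.e. A_k = {1,...,k-1}. *)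
Definition Ppoly (n : nat) (R : nzRingType) (f : {set 'I_n} -> 'I_n -> R)
  : {poly R} :=
  prod_roots f [seq ([set j : 'I_n | (j < i)%N], i) | i : 'I_n <- enum 'I_n].

Definition defining (k : fieldType) (n : nat) (Y : proot n -> Prop) : Prop :=
  exists ys : seq (proot n),
    size ys = n /\ all (@valid_proot n) ys /\ (forall y, y \in ys -> Y y) /\
    @Qholds k n (fun R f => Ppoly f = prod_roots f ys).

Inductive du_envelope (k : fieldType) (n : nat) (Z : proot n -> Prop)
  : proot n -> Prop :=
| env_base p : valid_proot p -> Z p -> du_envelope k Z p
| env_u (A : {set 'I_n}) (i j : 'I_n) (xi : proot n) :
    du_envelope k Z (A, i) -> du_envelope k Z (A, j) -> i != j ->
    valid_proot xi ->
    @Qholds k n (fun R f =>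
      (f A i - f A j) * f A i = f xi.1 xi.2 * (f A i - f A j)) ->
    du_envelope k Z xi
| env_d (A B : {set 'I_n}) (i j : 'I_n) (eta : proot n) :
    du_envelope k Z (A, i) -> du_envelope k Z (B, j) ->
    i |: A = j |: B -> (A, i) != (B, j) ->
    valid_proot eta ->
    @Qholds k n (fun R f =>
      (f A i - f B j) * f eta.1 eta.2 = f A i * (f A i - f B j)) ->
    du_envelope k Z eta.

Definition sufficient (k : fieldType) (n : nat) (Z : proot n -> Prop) : Prop :=
  defining k (du_envelope k Z).

(* Main.v *)
Require Import Defs.
From HB Require Import structures.
From mathcomp Require Import all_boot all_order all_algebra.
Set Implicit Arguments. Unset Strict Implicit. Unset Printing Implicit Defensive.
Import GRing.Theory.
Local Open Scope ring_scope.

Lemma zh (V : zmodType) (c a b : V) : a - b = c + a - b - c.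
Proof. by rewrite addrAC [c + a]addrC addrK. Qed.

Lemma u_ident (k : fieldType) (n : nat) (R : algType k) (f : {set 'I_n} -> 'I_n -> R)
  (A : {set 'I_n}) (i j : 'I_n) : Qrel f -> i != j -> i \notin A -> j \notin A ->
  (f A i - f A j) * f A i = f (j |: A) i * (f A i - f A j).
Proof.
move=> Hf ij iA jA; have [e1 e2] := Hf A i j ij iA jA.
have ed : f (j |: A) i = f (i |: A) j + f A i - f A j by rewrite e1 addrK.
rewrite mulrBr -e2 -mulrBl ed; congr (_ * _).
exact: zh.
Qed.

Lemma d_ident (k : fieldType) (n : nat) (R : algType k) (f : {set 'I_n} -> 'I_n -> R)
  (C : {set 'I_n}) (i j : 'I_n) : Qrel f -> i != j -> i \notin C -> j \notin C ->
  (f (j |: C) i - f (i |: C) j) * f C i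
    = f (j |: C) i * (f (j |: C) i - f (i |: C) j).
Proof.
move=> Hf ij iC jC; have [e1 e2] := Hf C i j ij iC jC.
have ed : f (j |: C) i - f (i |: C) j = f C i - f C j.
  have ed' : f (j |: C) i = f (i |: C) j + f C i - f C j by rewrite e1 addrK.
  by rewrite ed' -zh.
by rewrite mulrBl e2 -mulrBr -ed.
Qed.

Lemma env_all0 (k : fieldType) (n : nat) m (p : proot n) :
  #|p.1| = m -> valid_proot p -> du_envelope k (fun p : proot n => p.1 = set0) p.
Proof.
elim: m p => [|m IH] [A i] /= hc hv.
  by apply: env_base => //=; apply/eqP; rewrite -cards_eq0 hc.
have : (0 < #|A|)%N by rewrite hc.
case/card_gt0P => j jA.
have iA : i \notin A := hv.
have ij : i != j by apply/eqP => E; rewrite E jA in iA.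
set B := A :\ j.
have eA : A = j |: B by rewrite setD1K.
have iB : i \notin B by rewrite in_setD1 negb_and iA orbT.
have jB : j \notin B by rewrite in_setD1 eqxx.
have cB : #|B| = m by move: hc; rewrite eA cardsU1 jB add1n => -[].
apply: (@env_u k n _ B i j (A, i)) => //.
- by apply: IH.
- by apply: IH.
- move=> R f Hf /=; rewrite eA; exact: u_ident.
Qed.

Lemma env_all1 (k : fieldType) (n : nat) m (p : proot n) :
  #|~: p.1| = m.+1 -> valid_proot p ->
  du_envelope k (fun p : proot n => p.1 = [set~ p.2]) p.
Proof.
elim: m p => [|m IH] [C i] /= hc hv; have iC : i \notin C := hv.
  apply: env_base => //=.
  have iCc : i \in ~: C by rewrite in_setC.
  have [x ex] := cards1P (introT eqP hc).
  have xi : x = i by move: iCc; rewrite ex in_set1 => /eqP.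
  by rewrite -[C]setCK ex xi.
have : (1 < #|~: C|)%N by rewrite hc.
have iCc : i \in ~: C by rewrite in_setC.
rewrite (cardsD1 i) iCc add1n ltnS => /card_gt0P [j].
rewrite in_setD1 in_setC => /andP [ji jC].
have ij : i != j by rewrite eq_sym.
apply: (@env_d k n _ (j |: C) (i |: C) i j (C, i)) => //.
- apply: IH => /=.
    by move: hc; rewrite setCU (cardsD1 j) in_setC jC add1n setIC -setDE => -[].
  by rewrite /valid_proot /= in_setU1 negb_or eq_sym ji iC.
- apply: IH => /=.
    by move: hc; rewrite setCU (cardsD1 i) in_setC iC add1n setIC -setDE => -[].
  by rewrite /valid_proot /= in_setU1 negb_or ji jC.
- by rewrite setUA [i |: _]setUC setUA.
- by rewrite xpair_eqE negb_and ij orbT.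
- move=> R f Hf /=; exact: d_ident.
Qed.

Lemma suff_all (k : fieldType) (n : nat) (Z : proot n -> Prop) :
  (forall p, valid_proot p -> du_envelope k Z p) -> sufficient k Z.
Proof.
move=> H.
exists [seq ([set j : 'I_n | (j < i)%N], i) | i : 'I_n <- enum 'I_n].
split; first by rewrite size_map size_enum_ord.
have hv : all (@valid_proot n)
   [seq ([set j : 'I_n | (j < i)%N], i) | i : 'I_n <- enum 'I_n].
  by apply/allP => y /mapP [i _ ->]; rewrite /valid_proot /= inE ltnn.
split=> //; split=> //.
by move=> y yin; apply: H; exact: (allP hv).
Qed.

Theorem proposition1p4p4 (k : fieldType) (n : nat) :
  sufficient k (fun p : proot n => p.1 = set0) /\
  sufficient k (fun p : proot n => p.1 = [set~ p.2]).
Proof.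
split; apply: suff_all => p hv.
  exact: (@env_all0 k n #|p.1|).
have : (0 < #|~: p.1|)%N by apply/card_gt0P; exists p.2; rewrite in_setC.
case E: #|~: p.1| => [|m] // _.
exact: (@env_all1 k n m).
Qed.
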